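(* Let $d\ge2$ and consider the linear system $\mathcal{S}_d$ in the unknowns $\alpha_{d,1},\ldots,\alpha_{d,d}$ consisting of the equations \begin{itemize} \item $\alpha_{d,d}=d-2$; \item for every $1\le k\le\lfloor d/2\rfloor$: $(d-k-1)\alpha_{d,k}+(k-1)\alpha_{d,d-k}+\alpha_{d,d}=2\big(k(d-k)-d+1\big)$; \item for every $1\le k\le\lfloor (d-1)/2\rfloor$: $(d-k-1)\alpha_{d,k}+2(d-k-2)\alpha_{d,k+1}+k\,\alpha_{d,d-k-1}+2(k-1)\alpha_{d,d-k}+2\alpha_{d,d}=2\big(3k(d-k-1)-2d+3\big)$. \end{itemize} Then, provided that $\alpha_{d,d-1}:=d-3$, the system $\mathcal{S}_d$ admits the unique solution $(\alpha_{d,1},\ldots,\alpha_{d,d})=(-1,0,1,\ldots,d-2)$, i.e. $\alpha_{d,j}=j-2$ for all $1\le j\le d$. *)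

(* Defs.v *)
From mathcomp Require Import all_boot all_order all_algebra.
Set Implicit Arguments. Unset Strict Implicit. Unset Printing Implicit Defensive.
Import Order.TTheory GRing.Theory Num.Theory.
Local Open Scope ring_scope.

(* The linear system S_d in the unknowns a 1, ..., a d (a : nat -> R;
   values of a outside 1..d are irrelevant).  Coefficients are computed
   in R to avoid truncated nat subtraction. *)
Definition system_S (R : numFieldType) (d : nat) (a : nat -> R) : Prop :=
  a d = d%:R - 2 /\
  (forall k : nat, (1 <= k <= d %/ 2)%N ->
     (d%:R - k%:R - 1) * a k + (k%:R - 1) * a (d - k)%N + a d
       = 2 * (k%:R * (d%:R - k%:R) - d%:R + 1)) /\
  (forall k : nat, (1 <= k <= (d - 1) %/ 2)%N ->
     (d%:R - k%:R - 1) * a k + 2 * (d%:R - k%:R - 2) * a k.+1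
     + k%:R * a (d - k - 1)%N + 2 * (k%:R - 1) * a (d - k)%N + 2 * a d
       = 2 * (3 * k%:R * (d%:R - k%:R - 1) - 2 * d%:R + 3)).

(* Main.v *)
Require Import Defs.
From mathcomp Require Import all_boot all_order all_algebra.
From mathcomp Require Import zify ring lra.
Import Order.TTheory GRing.Theory Num.Theory.
Local Open Scope ring_scope.

Lemma natrB' (R : realFieldType) (m n : nat) : (n <= m)%N ->
  ((m - n)%:R : R) = m%:R - n%:R.
Proof. by move=> h; rewrite natrB. Qed.

Theorem proposition4p15 (R : realFieldType) (d : nat) (hd : (2 <= d)%N) :
  system_S d (fun j : nat => j%:R - 2 : R) /\
  (forall a : nat -> R, a (d - 1)%N = d%:R - 3 -> system_S d a ->
     forall j : nat, (1 <= j <= d)%N -> a j = j%:R - 2).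
Proof.
split.
  split; first by [].
  split.
    move=> k /andP[h1 h2].
    have hk : (k <= d)%N by lia.
    rewrite natrB' //; ring.
  move=> k /andP[h1 h2].
  have hk : (k.+1 <= d)%N by lia.
  rewrite -subnDA addn1 natrB' // natrB' ?(ltnW hk) // -addn1 natrD; ring.
move=> a had1 [Ed [E1 E2]].
have Q : forall k, (1 <= k)%N -> (k <= d %/ 2)%N ->
    a k = k%:R - 2 /\ a (d - k)%N = (d - k)%:R - 2.
  elim=> [//|k IH] _ hk.
  have hkd : (k.+1 <= d)%N by lia.
  case: (posnP k) => [k0|kpos].
    subst k.
    split; last by rewrite natrB' // had1; ring.
    case: (ltngtP d 2) => [//|d3|d2]; first by lia.
      2: by move: had1; rewrite d2 (_ : (2-1 = 1)%N) // => ->; lra.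
    have := E1 1%N hk.
    rewrite had1 Ed => e.
    have hne : (d%:R - 1%:R - 1 : R) != 0.
      rewrite (_ : d%:R - 1%:R - 1 = (d-2)%N%:R :> R); first by rewrite pnatr_eq0; lia.
      by rewrite natrB' //; lra.
    have hx : (d%:R - 1%:R - 1) * (a 1%N - (1%:R - 2)) = 0 :> R by move: e; lra.
    by move/eqP: hx; rewrite mulf_eq0 (negbTE hne) /= subr_eq0 => /eqP.
  have [IHa IHb] := IH kpos (ltnW hk).
  have e1 := E1 k.+1 (andb_true_intro (conj (isT : (1 <= k.+1)%N) hk)).
  have hk2 : (1 <= k <= (d - 1) %/ 2)%N by apply/andP; split; lia.
  have e2 := E2 k hk2.
  move: e1 e2; rewrite IHa IHb Ed.
  have -> : (d - k.+1 = d - k - 1)%N by lia.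
  set p := a k.+1; set q := a (d - k - 1)%N.
  rewrite natrB' ?(ltnW hkd) // -addn1 natrD => e1 e2.
  have hx : (d%:R - k%:R - 2) * (p - (k%:R + 1 - 2)) = 0 :> R by lra.
  have hne : (d%:R - k%:R - 2 : R) != 0.
    have -> : (d%:R - k%:R - 2 : R) = (d - k - 2)%N%:R.
      rewrite natrB'; last by lia.
      rewrite natrB' //; last by lia.
    by rewrite pnatr_eq0; lia.
  move/eqP: hx; rewrite mulf_eq0 (negbTE hne) /= subr_eq0 => /eqP hp.
  split; first by rewrite hp -addn1 natrD.
  have hy : k%:R * (q - (d%:R - k%:R - 1 - 2)) = 0 :> R.
    move: e1; rewrite hp; lra.
  have knz : (k%:R : R) != 0 by rewrite pnatr_eq0 -lt0n.
  move/eqP: hy; rewrite mulf_eq0 (negbTE knz) /= subr_eq0 => /eqP ->.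
  rewrite (@natrB' R (d - k) 1); last by lia.
  rewrite natrB'; last by lia.
  ring.
move=> j /andP[j1 jd].
case: (leqP j (d %/ 2)) => hj; first by case: (Q j j1 hj).
case: (ltngtP j d) => hjd.
- have [_ h] := Q (d - j)%N ltac:(lia) ltac:(lia).
  by move: h; rewrite subKn.
- lia.
- by rewrite hjd.
Qed.
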